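(* Let $S$ and $T$ be trees and give $E(S)\times E(T)$ the product partial order. Sending a shuffle $A$ of $S$ and $T$ to its set of edge labels gives a bijection between $Sh(S,T)$ and the set of subsets $A\subseteq E(S)\times E(T)$ satisfying: (1) the induced partial order on $A$ is treelike; (2) the set of maximal elements of $A$ is exactly $\mathrm{Leaves}(S)\times\mathrm{Leaves}(T)$; (3) $A$ is maximal under inclusion among subsets satisfying (1) and (2). Moreover, for a shuffle, the tree order on its edges coincides with the order induced from $E(S)\times E(T)$.
   Context: A tree is a finite connected graph without cycles whose external edges are open (attached to only one vertex). One external edge is designated the root; the other external edges are the leaves. Each vertex has exactly one outgoing edge (towards the root) and a strictly positive number of incoming edges. Trees carry no planar structure. $E(T)$ denotes the set of edges of $T$, partially ordered by $e\le e'$ iff $e$ lies on the path from $e'$ to the root; $r_T$ denotes the root edge. For a non-leaf edge $e$, the edges immediately above $e$ are the incoming edges of the vertex whose outgoing edge is $e$. A partial order is treelike if it is finite, has a smallest element, and for each element $e$ the set $\{d: d\le e\}$ is linearly ordered (this is exactly the edge order of a tree). Shuffle: for trees $S,T$, a shuffle of $S$ and $T$ is a tree $A$ with a labelling of each edge by a pair $(s,t)\in E(S)\times E(T)$ such that: (1) the root of $A$ is labelled $(r_S,r_T)$; (2) the labelling restricts to a bijection from the leaves of $A$ onto $\mathrm{Leaves}(S)\times \mathrm{Leaves}(T)$; (3) if an edge of $A$ labelled $(s,t)$ is not a leaf of $A$, then the incoming edges of the vertex of $A$ directly above it are labelled either exactly $(s_1,t),\dots,(s_m,t)$, one for each edge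 $s_i$ immediately above $s$ in $S$, or exactly $(s,t_1),\dots,(s,t_n)$, one for each edge $t_j$ immediately above $t$ in $T$. Shuffles are taken up to isomorphism of labelled trees; $Sh(S,T)$ is the set of shuffles. *)

(* Defs.v *)
From mathcomp Require Import all_boot.
Set Implicit Arguments. Unset Strict Implicit. Unset Printing Implicit Defensive.

Definition treelike_on (E : finType) (D : {set E}) (le : rel E) : Prop :=
  [/\ (forall x, x \in D -> le x x),
      (forall x y, x \in D -> y \in D -> le x y -> le y x -> x = y),
      (forall x y z, x \in D -> y \in D -> z \in D -> le x y -> le y z -> le x z),
      (exists2 r, r \in D & forall x, x \in D -> le r x)
    & (forall e d1 d2, e \in D -> d1 \in D -> d2 \in D ->
         le d1 e -> le d2 e -> le d1 d2 || le d2 d1)].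

Definition treelike (E : finType) (le : rel E) : Prop := treelike_on [set: E] le.

(* A tree, represented by its (finite) set of edges with the edge order
   e <= e' iff e lies on the path from e' to the root.  Since vertices have
   at least one incoming edge, a tree is the same as a finite treelike poset. *)
Record tree := Tree {
  tedge : finType;
  tle : rel tedge;
  tle_treelike : treelike tle }.

Definition maximal_in (E : finType) (D : {set E}) (le : rel E) (x : E) : Prop :=
  x \in D /\ (forall y, y \in D -> le x y -> y = x).

Definition is_root (X : tree) (r : tedge X) : Prop := forall x, tle r x.

(* leaves: the maximal edges (equivalently, the non-root external edges,
   or the unique edge of the trivial tree) *)
Definition is_leaf (X : tree) (e : tedge X) : Prop :=
  maximal_in [set: tedge X] (@tle X) e.

Definition imm_above (X : tree) (e d : tedge X) : Prop :=
  [/\ d != e, tle e d & forall c, tle e c -> tle c d -> c = e \/ c = d].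

Definition prod_le (S T : tree) : rel (tedge S * tedge T) :=
  fun p q => tle p.1 q.1 && tle p.2 q.2.

Definition is_shuffle (S T : tree) (A : tree) (l : tedge A -> tedge S * tedge T)
  : Prop :=
  [/\
      (forall a, is_root a -> is_root (l a).1 /\ is_root (l a).2),
      (forall a, is_leaf a -> is_leaf (l a).1 /\ is_leaf (l a).2),
      (forall a b, is_leaf a -> is_leaf b -> l a = l b -> a = b),
      (forall s t, is_leaf s -> is_leaf t -> exists2 a, is_leaf a & l a = (s, t))
    &
      (forall a, ~ is_leaf a ->
         (forall c1 c2, imm_above a c1 -> imm_above a c2 -> l c1 = l c2 -> c1 = c2) /\
         (((forall c, imm_above a c -> (l c).2 = (l a).2 /\ imm_above (l a).1 (l c).1) /\
           (forall s', imm_above (l a).1 s' ->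
              exists2 c, imm_above a c & l c = (s', (l a).2)))
          \/
          ((forall c, imm_above a c -> (l c).1 = (l a).1 /\ imm_above (l a).2 (l c).2) /\
           (forall t', imm_above (l a).2 t' ->
              exists2 c, imm_above a c & l c = ((l a).1, t')))))].

Definition shuffle_iso (S T : tree) (A : tree) (l : tedge A -> tedge S * tedge T)
  (B : tree) (m : tedge B -> tedge S * tedge T) : Prop :=
  exists f : tedge A -> tedge B,
    [/\ bijective f, (forall x y, tle (f x) (f y) = tle x y) & (forall x, m (f x) = l x)].

Definition label_set (S T : tree) (A : tree) (l : tedge A -> tedge S * tedge T)
  : {set tedge S * tedge T} := [set l a | a : tedge A].

Definition shuffle_pre (S T : tree) (X : {set tedge S * tedge T}) : Prop :=
  treelike_on X (@prod_le S T) /\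
  (forall p, maximal_in X (@prod_le S T) p <-> (is_leaf p.1 /\ is_leaf p.2)).

Definition shuffle_subset (S T : tree) (X : {set tedge S * tedge T}) : Prop :=
  shuffle_pre X /\ (forall Y : {set tedge S * tedge T}, X \subset Y -> shuffle_pre Y -> Y = X).

(* Main.v *)
Require Import Defs.
From mathcomp Require Import all_boot.
Set Implicit Arguments. Unset Strict Implicit. Unset Printing Implicit Defensive.


Definition porder (E : finType) (le : rel E) : Prop :=
  [/\ (forall x, le x x), (forall x y, le x y -> le y x -> x = y)
    & (forall x y z, le x y -> le y z -> le x z)].

Lemma up_ind (E : finType) (le : rel E) (Q : E -> Prop) :
  porder le ->
  (forall a, (forall c, le a c -> c != a -> Q c) -> Q a) -> forall a, Q a.
Proof.
move=> [Hr Ha Ht] H.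
suff: forall n a, #|[pred z | le a z]| <= n -> Q a by move=> K a; exact: (K _ a (leqnn _)).
elim=> [|n IH] a.
  rewrite leqn0 => /eqP /card0_eq /(_ a). by rewrite inE Hr.
move=> Hc; apply: H => c Hac Hca; apply: IH.
rewrite -ltnS; apply: leq_trans Hc; apply: proper_card; apply/properP; split.
  by apply/subsetP => z; rewrite !inE => Hcz; exact: Ht Hac Hcz.
exists a; rewrite !inE ?Hr //; apply/negP => Hca'.
by move/eqP: Hca; apply; apply: Ha.
Qed.

Lemma ex_max (E : finType) (le : rel E) (P : pred E) x :
  porder le -> P x ->
  exists y, [/\ P y, le x y & forall z, P z -> le y z -> z = y].
Proof.
move=> Hp; move: x; apply: (@up_ind E le (fun x => P x -> exists y, [/\ P y, le x y & forall z, P z -> le y z -> z = y]) Hp).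
case: Hp => Hr Ha Ht.
move=> a IH Pa.
case: (boolP [exists z, [&& P z, le a z & z != a]]).
  case/existsP => z /and3P [Pz Haz Hza].
  case: (IH z Haz Hza Pz) => y [Py Hzy Hy]; exists y; split => //; exact: Ht Haz Hzy.
rewrite negb_exists => /forallP Hn; exists a; split => // z Pz Haz.
by apply/eqP; apply: contraNT (Hn z) => Hz; rewrite Pz Haz Hz.
Qed.

Lemma porder_dual (E : finType) (le : rel E) : porder le -> porder (fun x y => le y x).
Proof. case=> Hr Ha Ht; split => //. by move=> x y ? ?; apply: Ha. by move=> x y z ? ?; apply: Ht; eauto. Qed.

Lemma ex_min (E : finType) (le : rel E) (P : pred E) x :
  porder le -> P x ->
  exists y, [/\ P y, le y x & forall z, P z -> le z y -> z = y].
Proof. move=> /porder_dual Hp Px; exact: (ex_max Hp Px). Qed.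

Lemma ex_child (E : finType) (le : rel E) (P : pred E) x y :
  porder le -> P y -> le x y -> y != x ->
  exists c, [/\ P c, le x c, c != x, le c y &
     forall d, P d -> le x d -> le d c -> d = x \/ d = c].
Proof.
move=> Hp Py Hxy Hyx.
have Hp' := Hp; case: Hp' => Hr Ha Ht.
have [c [/and4P [Pc Hxc Hcx Hcy] _ Hmin]] :=
  ex_min (P := [pred c | [&& P c, le x c, c != x & le c y]]) Hp
   (introT and4P (And4 Py Hxy Hyx (Hr y))).
exists c; split => // d Pd Hxd Hdc.
case: (eqVneq d x) => [->|Hdx]; [by left|right].
apply: Hmin => //; rewrite inE Pd Hxd Hdx /=; exact: Ht Hdc Hcy.
Qed.

Lemma tree_porder (X : tree) : porder (@tle X).
Proof.
case: (tle_treelike X) => Hr Ha Ht _ _; split.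
- by move=> x; apply: Hr; rewrite in_setT.
- by move=> x y; apply: Ha; rewrite in_setT.
- by move=> x y z; apply: Ht; rewrite in_setT.
Qed.

Lemma tle_refl (X : tree) (x : tedge X) : tle x x.
Proof. by case: (tree_porder X). Qed.
Lemma tle_anti (X : tree) (x y : tedge X) : tle x y -> tle y x -> x = y.
Proof. by case: (tree_porder X) => _ H _; apply: H. Qed.
Lemma tle_trans (X : tree) (x y z : tedge X) : tle x y -> tle y z -> tle x z.
Proof. by case: (tree_porder X) => _ _ H; apply: H. Qed.
Lemma tle_lin (X : tree) (e d1 d2 : tedge X) : tle d1 e -> tle d2 e -> tle d1 d2 || tle d2 d1.
Proof. by case: (tle_treelike X) => _ _ _ _ H; apply: H; rewrite in_setT. Qed.
Lemma tree_root (X : tree) : exists r : tedge X, is_root r.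
Proof. by case: (tle_treelike X) => _ _ _ [r _ H] _; exists r => x; apply: H; rewrite in_setT. Qed.

Lemma is_leafP (X : tree) (l : tedge X) : is_leaf l <-> (forall y, tle l y -> y = l).
Proof. split; [by case=> _ H y; apply: H; rewrite in_setT | by move=> H; split; [rewrite in_setT | move=> y _; apply: H]]. Qed.

Lemma leaf_above (X : tree) (s : tedge X) : exists l, is_leaf l /\ tle s l.
Proof.
have [y [_ Hsy Hy]] := ex_max (P := predT) (tree_porder X) (erefl true : predT s).
by exists y; split => //; apply/is_leafP => z; apply: Hy.
Qed.

Lemma imm_cmp (X : tree) (s u v : tedge X) :
  imm_above s u -> imm_above s v -> tle u v -> u = v.
Proof.
case=> Hus Hsu _ [_ _ Hv] Huv.
by case: (Hv u Hsu Huv) => // Hus'; move/eqP: Hus.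
Qed.

Lemma imm_ex (X : tree) (s y : tedge X) : tle s y -> y != s ->
  exists s', imm_above s s' /\ tle s' y.
Proof.
move=> Hsy Hys.
have [c [_ Hsc Hcs Hcy Hc]] := ex_child (P := predT) (tree_porder X) (erefl true) Hsy Hys.
by exists c; split => //; split => // d Hsd Hdc; apply: Hc.
Qed.

Lemma prod_porder (S T : tree) : porder (@prod_le S T).
Proof.
split.
- by move=> x; rewrite /prod_le !tle_refl.
- move=> [a b] [c d]; rewrite /prod_le /= => /andP [H1 H2] /andP [H3 H4].
  by rewrite (tle_anti H1 H3) (tle_anti H2 H4).
- move=> x y z; rewrite /prod_le => /andP [H1 H2] /andP [H3 H4].
  by rewrite (tle_trans H1 H3) (tle_trans H2 H4).
Qed.

Lemma prod_refl (S T : tree) x : @prod_le S T x x.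
Proof. by case: (prod_porder S T). Qed.
Lemma prod_anti (S T : tree) x y : @prod_le S T x y -> prod_le y x -> x = y.
Proof. by case: (prod_porder S T) => _ H _; apply: H. Qed.
Lemma prod_trans (S T : tree) x y z : @prod_le S T x y -> prod_le y z -> prod_le x z.
Proof. by case: (prod_porder S T) => _ _ H; apply: H. Qed.

Lemma imm_not_leaf (X : tree) (a c : tedge X) : imm_above a c -> ~ is_leaf a.
Proof. by case=> Hca Hac _ /is_leafP /(_ c Hac) Hc; move/eqP: Hca. Qed.

Lemma child_step (S T A : tree) (l : tedge A -> tedge S * tedge T) a c :
  is_shuffle l -> imm_above a c ->
  ((l c).2 = (l a).2 /\ imm_above (l a).1 (l c).1) \/
  ((l c).1 = (l a).1 /\ imm_above (l a).2 (l c).2).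
Proof.
case=> _ _ _ _ H3 Hac; have [_ [[H _]|[H _]]] := H3 a (imm_not_leaf Hac).
by left; apply: H. by right; apply: H.
Qed.

Lemma child_le (S T A : tree) (l : tedge A -> tedge S * tedge T) a c :
  is_shuffle l -> imm_above a c -> prod_le (l a) (l c) /\ l c != l a.
Proof.
move=> Hs Hac; case: (child_step Hs Hac) => [[E [Hn H _]]|[E [Hn H _]]];
  rewrite /prod_le E tle_refl ?andbT ?H //; split => //;
  apply: contra Hn => /eqP ->; by [].
Qed.

Lemma shuffle_fwd (S T A : tree) (l : tedge A -> tedge S * tedge T) a b :
  is_shuffle l -> tle a b -> prod_le (l a) (l b).
Proof.
move=> Hs; move: a b; apply: (@up_ind _ (@tle A) (fun a => forall b, tle a b -> prod_le (l a) (l b)) (tree_porder A)).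
move=> a IH b Hab.
case: (eqVneq b a) => [->|Hba]; first exact: prod_refl.
have [c [Hac Hcb]] := imm_ex Hab Hba.
have [H1 _] := child_le Hs Hac.
apply: prod_trans H1 _; apply: IH => //; [by case: Hac|by case: Hac].
Qed.

Lemma shuffle_strict (S T A : tree) (l : tedge A -> tedge S * tedge T) a b :
  is_shuffle l -> tle a b -> b != a -> l b != l a.
Proof.
move=> Hs Hab Hba.
have [c [Hac Hcb]] := imm_ex Hab Hba.
have [H1 H2] := child_le Hs Hac.
have H3 := shuffle_fwd Hs Hcb.
apply/negP => /eqP E; move/eqP: H2; apply.
by apply: prod_anti => //; rewrite -E.
Qed.

Lemma shuffle_bwd (S T A : tree) (l : tedge A -> tedge S * tedge T) a b :
  is_shuffle l -> prod_le (l a) (l b) -> tle a b.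
Proof.
move=> Hs Hlab.
have [r Hr] := tree_root A.
have [m [/andP [Hma Hmb] _ Hm]] :=
  ex_max (P := [pred m | tle m a && tle m b]) (tree_porder A) (introT andP (conj (Hr a) (Hr b))).
case: (eqVneq m a) => [<-//|Hma'].
case: (eqVneq m b) => [Emb|Hmb'].
  subst m; case: (eqVneq a b) => [->|Hab]; first exact: tle_refl.
  have := shuffle_strict Hs Hma Hab; rewrite eq_sym => /negP; case.
  by apply/eqP; apply: prod_anti => //; exact: shuffle_fwd Hs Hma.
exfalso.
have Hma2 : a != m by rewrite eq_sym.
have Hmb2 : b != m by rewrite eq_sym.
have [c [Hmc Hca]] := imm_ex Hma Hma2.
have [c' [Hmc' Hcb]] := imm_ex Hmb Hmb2.
have Hcc : c != c'.
  apply/eqP => E; subst c'; case: Hmc => Hcm Hmc _; move/eqP: Hcm; apply.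
  by apply: Hm => //; rewrite inE Hca Hcb.
have Hla := shuffle_fwd Hs Hca; have Hlb := shuffle_fwd Hs Hcb.
have Hcb2 : prod_le (l c) (l b) := prod_trans Hla Hlab.
case: Hs => _ _ _ _ H3; have [Hinj [[H _]|[H _]]] := H3 m (imm_not_leaf Hmc).
- have [E1 I1] := H c Hmc; have [E2 I2] := H c' Hmc'.
  have Hne : (l c).1 != (l c').1.
    apply: contra Hcc => /eqP E; apply/eqP; apply: Hinj => //.
    by move: E E1 E2; case: (l c) => ? ? ; case: (l c') => ? ? /= -> -> ->.
  move: Hcb2 Hlb; rewrite /prod_le => /andP [K1 _] /andP [K2 _].
  case/orP: (tle_lin K1 K2) => K; move/eqP: Hne; apply.
  + exact: imm_cmp I1 I2 K.
  + by apply/esym; exact: imm_cmp I2 I1 K.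
- have [E1 I1] := H c Hmc; have [E2 I2] := H c' Hmc'.
  have Hne : (l c).2 != (l c').2.
    apply: contra Hcc => /eqP E; apply/eqP; apply: Hinj => //.
    by move: E E1 E2; case: (l c) => ? ? ; case: (l c') => ? ? /= -> -> ->.
  move: Hcb2 Hlb; rewrite /prod_le => /andP [_ K1] /andP [_ K2].
  case/orP: (tle_lin K1 K2) => K; move/eqP: Hne; apply.
  + exact: imm_cmp I1 I2 K.
  + by apply/esym; exact: imm_cmp I2 I1 K.
Qed.

Lemma shuffle_order (S T A : tree) (l : tedge A -> tedge S * tedge T) a b :
  is_shuffle l -> tle a b = prod_le (l a) (l b).
Proof. move=> Hs; apply/idP/idP; [exact: shuffle_fwd | exact: shuffle_bwd]. Qed.

Lemma shuffle_inj (S T A : tree) (l : tedge A -> tedge S * tedge T) :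
  is_shuffle l -> injective l.
Proof.
move=> Hs a b E; apply: tle_anti; rewrite (shuffle_order _ _ Hs) E prod_refl //.
Qed.

Lemma pre_lin (S T : tree) (X : {set tedge S * tedge T}) e d1 d2 :
  shuffle_pre X -> e \in X -> d1 \in X -> d2 \in X -> prod_le d1 e -> prod_le d2 e ->
  prod_le d1 d2 || prod_le d2 d1.
Proof. by case=> [[_ _ _ _ H] _]; apply: H. Qed.

Lemma leafpair_in (S T : tree) (X : {set tedge S * tedge T}) p :
  shuffle_pre X -> is_leaf p.1 -> is_leaf p.2 -> maximal_in X (@prod_le S T) p.
Proof. by case=> _ H L1 L2; apply/H. Qed.

Lemma pair_ext (U V : Type) (x y : U * V) : x.1 = y.1 -> x.2 = y.2 -> x = y.
Proof. by case: x; case: y => ? ? ? ? /= -> ->. Qed.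

Lemma label_subset (S T A : tree) (l : tedge A -> tedge S * tedge T) :
  is_shuffle l -> shuffle_subset (label_set l).
Proof.
move=> Hs; have Hord := shuffle_order _ _ Hs; have Hinj := shuffle_inj Hs.
have Hpre : shuffle_pre (label_set l).
  split.
    split.
    - by move=> x _; apply: prod_refl.
    - by move=> x y _ _; apply: prod_anti.
    - by move=> x y z _ _ _; apply: prod_trans.
    - have [r Hr] := tree_root A; exists (l r); first by apply: imset_f.
      by move=> x /imsetP [a _ ->]; rewrite -Hord.
    - move=> e d1 d2 /imsetP [a _ ->] /imsetP [b1 _ ->] /imsetP [b2 _ ->].
      rewrite -!Hord; exact: tle_lin.
  move=> p; split.
    case=> /imsetP [a _ ->] Hm.
    have La : is_leaf a.
      apply/is_leafP => y Hay; apply: Hinj; apply: Hm; first exact: imset_f.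
      by rewrite -Hord.
    by case: Hs => _ H2 _ _ _; apply: H2.
  case=> L1 L2; case: Hs => _ _ _ H4 _.
  have [a La E] := H4 _ _ L1 L2; rewrite -surjective_pairing in E.
  split; first by rewrite -E; apply: imset_f.
  move=> y /imsetP [b _ ->]; rewrite -E -Hord => Hab.
  by rewrite (proj1 (is_leafP a) La b Hab).
split => // Y HXY HY.
apply/eqP; rewrite eqEsubset HXY andbT; apply/subsetP => y Hy.
have Hpo := prod_porder S T.
have [q [Hq Hyq Hqm]] := ex_max (P := mem Y) Hpo Hy.
have [L1 L2] : is_leaf q.1 /\ is_leaf q.2 by case: HY => _ H; apply/H; split.
case: (Hs) => H1 _ _ H4 _.
have [b Lb Eb] := H4 _ _ L1 L2; rewrite -surjective_pairing in Eb.
have [r Hr] := tree_root A.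
have Hry : prod_le (l r) y.
  by have [R1 R2] := H1 r Hr; rewrite /prod_le R1 R2.
have [a [/andP [Hab Hay] _ Ham]] :=
  ex_max (P := [pred a | tle a b && prod_le (l a) y]) (tree_porder A)
     (introT andP (conj (Hr b) Hry)).
case: (eqVneq b a) => [Eab|Hba].
  subst a; have -> : y = l b by apply: prod_anti => //; rewrite Eb.
  exact: imset_f.
have [c [Hac Hcb]] := imm_ex Hab Hba.
have HcY : l c \in Y by apply: (subsetP HXY); apply: imset_f.
have Hlcq : prod_le (l c) q by rewrite -Eb -Hord.
case/orP: (pre_lin HY Hq HcY Hy Hlcq Hyq) => Hcy.
  have : c = a by apply: Ham; [rewrite inE Hcb Hcy | case: Hac].
  by move=> E; case: Hac => /eqP; rewrite E.
case: (child_step Hs Hac) => [[E2 I1]|[E1 I2]].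
- move: Hay Hcy; rewrite /prod_le => /andP [K1 K2] /andP [K3 K4].
  have Ey2 : y.2 = (l a).2 by apply: tle_anti => //; rewrite -E2.
  case: I1 => _ _ /(_ _ K1 K3) [] Ey1.
  + have -> : y = l a by apply: pair_ext.
    exact: imset_f.
  + have -> : y = l c by apply: pair_ext; rewrite ?E2.
    exact: imset_f.
- move: Hay Hcy; rewrite /prod_le => /andP [K1 K2] /andP [K3 K4].
  have Ey1 : y.1 = (l a).1 by apply: tle_anti => //; rewrite -E1.
  case: I2 => _ _ /(_ _ K2 K4) [] Ey2.
  + have -> : y = l a by apply: pair_ext.
    exact: imset_f.
  + have -> : y = l c by apply: pair_ext; rewrite ?E1.
    exact: imset_f.
Qed.

Lemma iso_label (S T A B : tree) (l : tedge A -> tedge S * tedge T) (m : tedge B -> tedge S * tedge T) :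
  shuffle_iso l m -> label_set l = label_set m.
Proof.
case=> f [[g fK gK] _ Hm].
apply/setP => p; apply/imsetP/imsetP => [[a _ ->]|[b _ ->]].
  by exists (f a) => //; rewrite Hm.
by exists (g b) => //; rewrite -Hm gK.
Qed.

Lemma label_iso (S T A B : tree) (l : tedge A -> tedge S * tedge T) (m : tedge B -> tedge S * tedge T) :
  is_shuffle l -> is_shuffle m -> label_set l = label_set m -> shuffle_iso l m.
Proof.
move=> Hl Hm E.
have [a0 _] := tree_root A; have [b0 _] := tree_root B.
have Hf : forall a, exists b, m b = l a.
  move=> a; have : l a \in label_set m by rewrite -E; apply: imset_f.
  by case/imsetP => b _ ->; exists b.
have Hg : forall b, exists a, l a = m b.
  move=> b; have : m b \in label_set l by rewrite E; apply: imset_f.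
  by case/imsetP => a _ ->; exists a.
pose f a := odflt b0 [pick b | m b == l a].
pose g b := odflt a0 [pick a | l a == m b].
have fP a : m (f a) = l a.
  rewrite /f; case: pickP => [b /eqP //|H]; have [b Hb] := Hf a.
  by move: (H b); rewrite Hb eqxx.
have gP b : l (g b) = m b.
  rewrite /g; case: pickP => [a /eqP //|H]; have [a Ha] := Hg b.
  by move: (H a); rewrite Ha eqxx.
exists f; split => //.
- exists g => [a|b].
  + by apply: (shuffle_inj Hl); rewrite gP fP.
  + by apply: (shuffle_inj Hm); rewrite fP gP.
- by move=> x y; rewrite (shuffle_order _ _ Hm) (shuffle_order _ _ Hl) !fP.
Qed.

Lemma pre_base (S T : tree) (Y : {set tedge S * tedge T}) :
  (exists2 r, r \in Y & forall x, x \in Y -> prod_le r x) ->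
  (forall e d1 d2, e \in Y -> d1 \in Y -> d2 \in Y ->
         prod_le d1 e -> prod_le d2 e -> prod_le d1 d2 || prod_le d2 d1) ->
  (forall p, maximal_in Y (@prod_le S T) p <-> (is_leaf p.1 /\ is_leaf p.2)) ->
  shuffle_pre Y.
Proof.
move=> Hr Hl Hm; split => //; split => //.
- by move=> x _; apply: prod_refl.
- by move=> x y _ _; apply: prod_anti.
- by move=> x y z _ _ _; apply: prod_trans.
Qed.

Lemma insert_pre (S T : tree) (X : {set tedge S * tedge T}) w z y :
  shuffle_pre X -> w \in X -> prod_le w z -> y \in X -> prod_le z y -> y != z ->
  (forall d1 d2, d1 \in X -> d2 \in X -> prod_le d1 z -> prod_le d2 z -> prod_le d1 d2 || prod_le d2 d1) ->
  (forall d e, d \in X -> e \in X -> prod_le z e -> prod_le d e -> prod_le d z || prod_le z d) ->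
  shuffle_pre (z |: X).
Proof.
move=> HX Hw Hwz Hy Hzy Hyz Hd He.
have HX' := HX; case: HX' => [[_ _ _ [r Hr Hrx] Hlin] Hmax].
apply: pre_base.
- exists r; first by rewrite in_setU1 Hr orbT.
  move=> x; rewrite in_setU1 => /orP [/eqP ->|]; last exact: Hrx.
  exact: prod_trans (Hrx _ Hw) Hwz.
- move=> e d1 d2; rewrite !in_setU1.
  case/orP=> [/eqP ->|He'].
    case/orP=> [/eqP -> _ _ H|H1]; first by rewrite H orbT.
    case/orP=> [/eqP -> H _|H2]; first by rewrite H.
    exact: Hd.
  case/orP=> [/eqP ->|H1].
    case/orP=> [/eqP ->|H2]; first by rewrite prod_refl.
    move=> H3 H4; rewrite orbC; exact: (He d2 e H2 He' H3 H4).
  case/orP=> [/eqP ->|H2]; last exact: Hlin.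
  move=> H3 H4; exact: (He d1 e H1 He' H4 H3).
- move=> p; split.
    case; rewrite in_setU1 => /orP [/eqP Ep|Hp] Hm.
      by move: (Hm y); rewrite in_setU1 Hy orbT Ep => /(_ isT Hzy) E; move: Hyz; rewrite E eqxx.
    apply/Hmax; split => // q Hq; apply: Hm; by rewrite in_setU1 Hq orbT.
  move/Hmax => [Hp Hm]; split; first by rewrite in_setU1 Hp orbT.
  move=> q; rewrite in_setU1 => /orP [/eqP ->|Hq]; last exact: Hm.
  move=> Hpz; have Eyp := Hm y Hy (prod_trans Hpz Hzy).
  have Ezp : z = p by apply: prod_anti => //; rewrite -Eyp.
  by move/eqP: Hyz; rewrite Eyp Ezp.
Qed.

Lemma root_in (S T : tree) (X : {set tedge S * tedge T}) rS rT :
  shuffle_subset X -> is_root rS -> is_root rT -> (rS, rT) \in X.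
Proof.
move=> [HX Hmx] HrS HrT.
set z := (rS, rT).
have Hz : forall x, prod_le z x by move=> x; rewrite /prod_le HrS HrT.
have HX' := HX; case: HX' => [[_ _ _ [r Hr Hrx] Hlin] Hmax].
suff : shuffle_pre (z |: X) by move/(Hmx _ (subsetUr _ _)) => <-; rewrite setU11.
apply: pre_base.
- by exists z; [rewrite setU11|move=> x _; apply: Hz].
- move=> e d1 d2; rewrite !in_setU1.
  case/orP=> [/eqP ->|He'].
    case/orP=> [/eqP ->|H1]; first by move=> *; rewrite Hz.
    case/orP=> [/eqP ->|H2]; first by move=> *; rewrite Hz orbT.
    by move=> H3 H4; rewrite (prod_trans H3 (Hz d2)).
  case/orP=> [/eqP ->|H1]; first by move=> *; rewrite Hz.
  case/orP=> [/eqP ->|H2]; first by move=> *; rewrite Hz orbT.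
  exact: Hlin.
- move=> p; split.
    case=> Hp Hm; apply/Hmax; split.
      move: Hp; rewrite in_setU1 => /orP [/eqP Ep|//].
      by have := Hm r; rewrite in_setU1 Hr orbT Ep => /(_ isT (Hz r)) <-.
    by move=> q Hq; apply: Hm; rewrite in_setU1 Hq orbT.
  move/Hmax => [Hp Hm]; split; first by rewrite in_setU1 Hp orbT.
  move=> q; rewrite in_setU1 => /orP [/eqP ->|Hq]; last exact: Hm.
  by move=> Hpz; apply: prod_anti => //; apply: Hz.
Qed.

Lemma cmpX (S T : tree) (X : {set tedge S * tedge T}) p q u :
  shuffle_pre X -> p \in X -> q \in X -> prod_le p u -> prod_le q u ->
  prod_le p q || prod_le q p.
Proof.
move=> HX Hp Hq Hpu Hqu.
have [l1 [L1 H1]] := leaf_above u.1; have [l2 [L2 H2]] := leaf_above u.2.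
have [Hl _] : maximal_in X (@prod_le S T) (l1, l2) by apply: leafpair_in.
have Hu : prod_le u (l1, l2) by rewrite /prod_le H1 H2.
exact: pre_lin HX Hl Hp Hq (prod_trans Hpu Hu) (prod_trans Hqu Hu).
Qed.

Definition childX (S T : tree) (X : {set tedge S * tedge T}) x c :=
  [/\ c \in X, c != x, prod_le x c &
     forall d, d \in X -> prod_le x d -> prod_le d c -> d = x \/ d = c].

Lemma ins_fail (S T : tree) (X : {set tedge S * tedge T}) x c z :
  shuffle_subset X -> x \in X -> childX X x c -> prod_le x z -> prod_le z c ->
  z != x -> z != c ->
  exists d e, [/\ d \in X, e \in X, prod_le z e, prod_le d e & ~~ prod_le d z && ~~ prod_le z d].
Proof.
move=> [HX Hmx] Hx [Hc Hcx Hxc Hch] Hxz Hzc Hzx Hzc'.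
case: (boolP [exists d, exists e, [&& d \in X, e \in X, prod_le z e, prod_le d e & ~~ prod_le d z && ~~ prod_le z d]]).
  case/existsP => d /existsP [e /and5P [H1 H2 H3 H4 H5]]; by exists d, e.
move/existsPn => H; exfalso.
have He : forall d e, d \in X -> e \in X -> prod_le z e -> prod_le d e -> prod_le d z || prod_le z d.
  move=> d e Hd He Hze Hde; move: (H d) => /existsPn /(_ e).
  by rewrite Hd He Hze Hde /= negb_and !negbK.
have Hcz : c != z by rewrite eq_sym.
have Hp := insert_pre HX Hx Hxz Hc Hzc Hcz
  (fun d1 d2 H1 H2 H3 H4 => pre_lin HX Hc H1 H2 (prod_trans H3 Hzc) (prod_trans H4 Hzc)) He.
have E := Hmx _ (subsetUr _ _) Hp.
have Hz : z \in X by rewrite -E setU11.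
case: (Hch z Hz Hxz Hzc) => /eqP; by [rewrite (negbTE Hzx) | rewrite (negbTE Hzc')].
Qed.

Lemma dS (S T : tree) (X : {set tedge S * tedge T}) x c s' :
  shuffle_subset X -> x \in X -> childX X x c -> imm_above x.1 s' -> tle s' c.1 ->
  (s', x.2) != c ->
  exists d, [/\ d \in X, d.1 = x.1, tle x.2 d.2 & d.2 != x.2].
Proof.
move=> HX Hx Hch Himm Hsc Hzc.
have Hch' := Hch; case: Hch' => Hc _ Hxc _.
set z := (s', x.2).
have Hxz : prod_le x z by case: Himm => _ H _; rewrite /prod_le /= H tle_refl.
have Hzc' : prod_le z c by move: Hxc; rewrite /prod_le /z /= Hsc => /andP [_ ->].
have Hzx : z != x.
  apply/eqP => E; case: Himm => /eqP H _ _; apply: H; by rewrite -E /z.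
have [d [e [Hd He Hze Hde /andP [Ndz Nzd]]]] := ins_fail HX Hx Hch Hxz Hzc' Hzx Hzc.
have Hxd : prod_le x d.
  case/orP: (cmpX (u := e) (proj1 HX) Hx Hd (prod_trans Hxz Hze) Hde) => // Hdx.
  by move: Ndz; rewrite (prod_trans Hdx Hxz).
move: (Hze) (Hde) => /andP [K1 _] /andP [K2 _].
have Hds : tle d.1 s'.
  case/orP: (tle_lin K1 K2) => // Hsd.
  by move: Nzd; rewrite /prod_le /= Hsd; move: Hxd => /andP [_ ->].
move: Hxd => /andP [Hx1 Hx2].
exists d; split => //.
  case: Himm => _ _ /(_ _ Hx1 Hds) [//|Eds].
  by move: Nzd; rewrite /prod_le /= -Eds tle_refl Hx2.
apply/eqP => E2.
have Ed1 : d.1 = x.1.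
  case: Himm => _ _ /(_ _ Hx1 Hds) [//|Eds].
  by move: Nzd; rewrite /prod_le /= -Eds tle_refl Hx2.
move: Ndz; rewrite (@pair_ext _ _ d x Ed1 E2); by rewrite Hxz.
Qed.

Lemma dT (S T : tree) (X : {set tedge S * tedge T}) x c t' :
  shuffle_subset X -> x \in X -> childX X x c -> imm_above x.2 t' -> tle t' c.2 ->
  (x.1, t') != c ->
  exists d, [/\ d \in X, d.2 = x.2, tle x.1 d.1 & d.1 != x.1].
Proof.
move=> HX Hx Hch Himm Hsc Hzc.
have Hch' := Hch; case: Hch' => Hc _ Hxc _.
set z := (x.1, t').
have Hxz : prod_le x z by case: Himm => _ H _; rewrite /prod_le /= H tle_refl.
have Hzc' : prod_le z c by move: Hxc; rewrite /prod_le /z /= Hsc => /andP [-> _].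
have Hzx : z != x.
  apply/eqP => E; case: Himm => /eqP H _ _; apply: H; by rewrite -E /z.
have [d [e [Hd He Hze Hde /andP [Ndz Nzd]]]] := ins_fail HX Hx Hch Hxz Hzc' Hzx Hzc.
have Hxd : prod_le x d.
  case/orP: (cmpX (u := e) (proj1 HX) Hx Hd (prod_trans Hxz Hze) Hde) => // Hdx.
  by move: Ndz; rewrite (prod_trans Hdx Hxz).
move: (Hze) (Hde) => /andP [_ K1] /andP [_ K2].
have Hds : tle d.2 t'.
  case/orP: (tle_lin K1 K2) => // Hsd.
  by move: Nzd; rewrite /prod_le /= Hsd; move: Hxd => /andP [-> _].
move: Hxd => /andP [Hx1 Hx2].
have Ed2 : d.2 = x.2.
  case: Himm => _ _ /(_ _ Hx2 Hds) [//|Eds].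
  by move: Nzd; rewrite /prod_le /= -Eds tle_refl Hx1.
exists d; split => //.
apply/eqP => E1.
move: Ndz; rewrite (@pair_ext _ _ d x E1 Ed2); by rewrite Hxz.
Qed.

Lemma child_shape (S T : tree) (X : {set tedge S * tedge T}) x c :
  shuffle_subset X -> x \in X -> childX X x c ->
  (c.2 = x.2 /\ imm_above x.1 c.1) \/ (c.1 = x.1 /\ imm_above x.2 c.2).
Proof.
move=> HX Hx Hch; have Hch' := Hch; case: Hch' => Hc Hcx Hxc _.
have HP := proj1 HX.
move: (Hxc) => /andP [L1 L2].
case: (eqVneq c.1 x.1) => E1; case: (eqVneq c.2 x.2) => E2.
- by move/eqP: Hcx; case; apply: pair_ext.
- right; split => //.
  have [t' [It Htc]] := imm_ex L2 E2.
  case: (eqVneq t' c.2) => [<-//|Ht].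
  have Hz : (x.1, t') != c by apply: contra Ht => /eqP <-.
  have [d [Hd Ed2 Hd1 Nd1]] := dT HX Hx Hch It Htc Hz.
  exfalso.
  have Hcu : prod_le c (d.1, c.2) by rewrite /prod_le E1 Hd1 tle_refl.
  have Hdu : prod_le d (d.1, c.2) by rewrite /prod_le Ed2 L2 tle_refl.
  case/orP: (cmpX HP Hc Hd Hcu Hdu) => /andP [K1 K2].
  + by move/eqP: E2; apply; apply: tle_anti => //; rewrite -Ed2.
  + by move/eqP: Nd1; apply; apply: tle_anti => //; rewrite -E1.
- left; split => //.
  have [s' [Is Hsc]] := imm_ex L1 E1.
  case: (eqVneq s' c.1) => [<-//|Hs].
  have Hz : (s', x.2) != c by apply: contra Hs => /eqP <-.
  have [d [Hd Ed1 Hd2 Nd2]] := dS HX Hx Hch Is Hsc Hz.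
  exfalso.
  have Hcu : prod_le c (c.1, d.2) by rewrite /prod_le E2 Hd2 tle_refl.
  have Hdu : prod_le d (c.1, d.2) by rewrite /prod_le Ed1 L1 tle_refl.
  case/orP: (cmpX HP Hc Hd Hcu Hdu) => /andP [K1 K2].
  + by move/eqP: E1; apply; apply: tle_anti => //; rewrite -Ed1.
  + by move/eqP: Nd2; apply; apply: tle_anti => //; rewrite -E2.
- exfalso.
  have [s' [Is Hsc]] := imm_ex L1 E1.
  have [t' [It Htc]] := imm_ex L2 E2.
  have Hz1 : (s', x.2) != c by apply: contra E2 => /eqP <-.
  have Hz2 : (x.1, t') != c by apply: contra E1 => /eqP <-.
  have [d [Hd Ed1 Hd2 Nd2]] := dS HX Hx Hch Is Hsc Hz1.
  have [d' [Hd' Ed2 Hd1 Nd1]] := dT HX Hx Hch It Htc Hz2.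
  have Hdu : prod_le d (d'.1, d.2) by rewrite /prod_le Ed1 Hd1 tle_refl.
  have Hdu' : prod_le d' (d'.1, d.2) by rewrite /prod_le Ed2 Hd2 tle_refl.
  case/orP: (cmpX HP Hd Hd' Hdu Hdu') => /andP [K1 K2].
  + by move/eqP: Nd2; apply; apply: tle_anti => //; rewrite -Ed2.
  + by move/eqP: Nd1; apply; apply: tle_anti => //; rewrite -Ed1.
Qed.

Lemma child_mixed (S T : tree) (X : {set tedge S * tedge T}) x c1 c2 :
  shuffle_pre X -> childX X x c1 -> childX X x c2 ->
  c1.2 = x.2 -> c1.1 != x.1 -> c2.1 = x.1 -> c2.2 != x.2 -> False.
Proof.
move=> HP [H1 _ /andP [A1 A2] _] [H2 _ /andP [B1 B2] _] E1 N1 E2 N2.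
have Hu1 : prod_le c1 (c1.1, c2.2) by rewrite /prod_le E1 B2 tle_refl.
have Hu2 : prod_le c2 (c1.1, c2.2) by rewrite /prod_le E2 A1 tle_refl.
case/orP: (cmpX HP H1 H2 Hu1 Hu2) => /andP [K1 K2].
- by move/eqP: N1; apply; apply: tle_anti => //; rewrite -E2.
- by move/eqP: N2; apply; apply: tle_anti => //; rewrite -E1.
Qed.

Lemma all_S (S T : tree) (X : {set tedge S * tedge T}) x c0 c :
  shuffle_subset X -> x \in X -> childX X x c0 -> c0.2 = x.2 -> c0.1 != x.1 ->
  childX X x c -> c.2 = x.2 /\ imm_above x.1 c.1.
Proof.
move=> HX Hx H0 E0 N0 Hc.
case: (child_shape HX Hx Hc) => // [[E1 [N1 _ _]]].
by exfalso; apply: (child_mixed (proj1 HX) H0 Hc E0 N0 E1 N1).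
Qed.

Lemma all_T (S T : tree) (X : {set tedge S * tedge T}) x c0 c :
  shuffle_subset X -> x \in X -> childX X x c0 -> c0.1 = x.1 -> c0.2 != x.2 ->
  childX X x c -> c.1 = x.1 /\ imm_above x.2 c.2.
Proof.
move=> HX Hx H0 E0 N0 Hc.
case: (child_shape HX Hx Hc) => // [[E1 [N1 _ _]]].
by exfalso; apply: (child_mixed (proj1 HX) Hc H0 E1 N1 E0 N0).
Qed.

Lemma child_of_le (S T : tree) (X : {set tedge S * tedge T}) x y :
  x \in X -> y \in X -> prod_le x y -> y != x -> exists c, childX X x c /\ prod_le c y.
Proof.
move=> Hx Hy Hxy Hyx.
have [c [Hc Hxc Hcx Hcy Hm]] := ex_child (P := mem X) (prod_porder S T) Hy Hxy Hyx.
by exists c; split.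
Qed.

Lemma cover_S (S T : tree) (X : {set tedge S * tedge T}) x c0 s' :
  shuffle_subset X -> x \in X -> childX X x c0 -> c0.2 = x.2 -> c0.1 != x.1 ->
  imm_above x.1 s' -> exists c, childX X x c /\ c = (s', x.2).
Proof.
move=> HX Hx H0 E0 N0 Is.
have [l1 [L1 K1]] := leaf_above s'; have [l2 [L2 K2]] := leaf_above x.2.
have [Hl Hlm] : maximal_in X (@prod_le S T) (l1, l2) by apply: leafpair_in (proj1 HX) _ _.
have Hxl : prod_le x (l1, l2).
  by case: Is => _ Hs _; rewrite /prod_le /= K2 (tle_trans Hs K1).
have Hlx : (l1, l2) != x.
  apply/eqP => E; case: H0 => Hc0 Nc0 Hxc0 _.
  by move/eqP: Nc0; apply; rewrite -E; apply: Hlm => //; rewrite E.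
have [c [Hc Hcl]] := child_of_le Hx Hl Hxl Hlx.
have [Ec Ic] := all_S HX Hx H0 E0 N0 Hc.
exists c; split => //; apply: pair_ext => //=.
move: Hcl => /andP [/= M1 _].
case/orP: (tle_lin M1 K1) => M; [exact: imm_cmp Ic Is M | exact/esym/(imm_cmp Is Ic M)].
Qed.

Lemma cover_T (S T : tree) (X : {set tedge S * tedge T}) x c0 t' :
  shuffle_subset X -> x \in X -> childX X x c0 -> c0.1 = x.1 -> c0.2 != x.2 ->
  imm_above x.2 t' -> exists c, childX X x c /\ c = (x.1, t').
Proof.
move=> HX Hx H0 E0 N0 Is.
have [l1 [L1 K1]] := leaf_above x.1; have [l2 [L2 K2]] := leaf_above t'.
have [Hl Hlm] : maximal_in X (@prod_le S T) (l1, l2) by apply: leafpair_in (proj1 HX) _ _.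
have Hxl : prod_le x (l1, l2).
  by case: Is => _ Hs _; rewrite /prod_le /= K1 (tle_trans Hs K2).
have Hlx : (l1, l2) != x.
  apply/eqP => E; case: H0 => Hc0 Nc0 Hxc0 _.
  by move/eqP: Nc0; apply; rewrite -E; apply: Hlm => //; rewrite E.
have [c [Hc Hcl]] := child_of_le Hx Hl Hxl Hlx.
have [Ec Ic] := all_T HX Hx H0 E0 N0 Hc.
exists c; split => //; apply: pair_ext => //=.
move: Hcl => /andP [_ /= M1].
case/orP: (tle_lin M1 K2) => M; [exact: imm_cmp Ic Is M | exact/esym/(imm_cmp Is Ic M)].
Qed.

Lemma shuffle_of (S T A : tree) (l : tedge A -> tedge S * tedge T) (X : {set tedge S * tedge T}) :
  shuffle_subset X -> injective l -> (forall a, l a \in X) ->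
  (forall p, p \in X -> exists a, l a = p) ->
  (forall a b, tle a b = prod_le (l a) (l b)) -> is_shuffle l.
Proof.
move=> HX Hinj Hin Hsur Hord.
have leafA : forall a, is_leaf a <-> maximal_in X (@prod_le S T) (l a).
  move=> a; split.
    move/is_leafP => H; split => // y Hy Hay; have [b Eb] := Hsur y Hy.
    by subst y; rewrite (H b) // Hord.
  case=> _ H; apply/is_leafP => y Hy; apply: Hinj; apply: H => //; by rewrite -Hord.
have immA : forall a c, imm_above a c <-> childX X (l a) (l c).
  move=> a c; split.
    case=> Nca Hac Hm; split => //.
    - by apply: contra Nca => /eqP /Hinj ->.
    - by rewrite -Hord.
    - move=> d Hd H1 H2; have [b Eb] := Hsur d Hd; subst d.
      by rewrite -!Hord in H1 H2; case: (Hm b H1 H2) => ->; [left|right].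
  case=> _ Nca Hac Hm; split.
  - by apply: contra Nca => /eqP ->.
  - by rewrite Hord.
  - move=> b H1 H2; rewrite !Hord in H1 H2.
    by case: (Hm _ (Hin b) H1 H2) => /Hinj ->; [left|right].
have [rS HrS] := tree_root S; have [rT HrT] := tree_root T.
have Hrho := root_in HX HrS HrT.
split.
- move=> a Ha; have [b Eb] := Hsur _ Hrho.
  have := Ha b; rewrite Hord Eb => /andP [K1 K2].
  by split => s; [apply: tle_trans K1 (HrS s) | apply: tle_trans K2 (HrT s)].
- by move=> a /leafA /(proj2 (proj1 HX)).
- by move=> a b _ _; apply: Hinj.
- move=> s t Ls Lt.
  have [Hst _] : maximal_in X (@prod_le S T) (s, t) by apply: leafpair_in (proj1 HX) _ _.
  have [a Ea] := Hsur _ Hst; exists a => //; apply/leafA; rewrite Ea.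
  exact: leafpair_in (proj1 HX) _ _.
move=> a Na; split.
  by move=> c1 c2 _ _; apply: Hinj.
have [c0 Hc0] : exists c0, imm_above a c0.
  case: (boolP [exists y, tle a y && (y != a)]).
    case/existsP => y /andP [Hay Nya]; have [c [Hc _]] := imm_ex Hay Nya; by exists c.
  move/existsPn => H; exfalso; apply: Na; apply/is_leafP => y Hay.
  by move: (H y); rewrite Hay /= negbK => /eqP.
have Hx := Hin a.
have H0 := proj1 (immA _ _) Hc0.
case: (child_shape HX Hx H0) => [[E0 I0]|[E0 I0]].
- have N0 : (l c0).1 != (l a).1 by case: I0.
  left; split.
    by move=> c /immA Hc; apply: (all_S HX Hx H0 E0 N0 Hc).
  move=> s' Is; have [c [Hc Ec]] := cover_S HX Hx H0 E0 N0 Is.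
  have [b Eb] := Hsur c (let: And4 h _ _ _ := Hc in h).
  by exists b => //; [apply/immA; rewrite Eb | rewrite Eb].
- have N0 : (l c0).2 != (l a).2 by case: I0.
  right; split.
    by move=> c /immA Hc; apply: (all_T HX Hx H0 E0 N0 Hc).
  move=> t' It; have [c [Hc Ec]] := cover_T HX Hx H0 E0 N0 It.
  have [b Eb] := Hsur c (let: And4 h _ _ _ := Hc in h).
  by exists b => //; [apply/immA; rewrite Eb | rewrite Eb].
Qed.

Lemma surj (S T : tree) (X : {set tedge S * tedge T}) :
  shuffle_subset X -> exists (A : tree) (l : tedge A -> tedge S * tedge T),
    is_shuffle l /\ label_set l = X.
Proof.
move=> HX.
pose E := {p : tedge S * tedge T | p \in X}.
pose le : rel E := fun a b => prod_le (val a) (val b).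
have Htl : treelike le.
  case: HX => [[[_ _ _ [r Hr Hrx] Hlin] _] _].
  split.
  - by move=> x _; apply: prod_refl.
  - by move=> x y _ _ H1 H2; apply: val_inj; apply: prod_anti.
  - by move=> x y z _ _ _; apply: prod_trans.
  - exists (exist _ r Hr); first by rewrite in_setT.
    by move=> x _; apply: Hrx; apply: valP.
  - by move=> e d1 d2 _ _ _; apply: Hlin; apply: valP.
exists (@Tree E le Htl), val.
have Himg : forall p, p \in X -> exists a : E, val a = p.
  by move=> p Hp; exists (exist _ p Hp).
split.
  apply: (shuffle_of HX) => //.
  - exact: val_inj.
  - by move=> a; apply: valP.
apply/setP => p; apply/imsetP/idP => [[a _ ->]|Hp]; first exact: valP.
by have [a Ea] := Himg p Hp; exists a.
Qed.
Unset Implicit Arguments.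

Theorem mainTheorem2 (S T : tree) :
  [/\ (* the label set of a shuffle lies in the target set *)
      (forall (A : tree) (l : tedge A -> tedge S * tedge T),
         is_shuffle l -> shuffle_subset (label_set l)),
      (* the map is well defined on isomorphism classes *)
      (forall (A : tree) (l : tedge A -> tedge S * tedge T)
              (B : tree) (m : tedge B -> tedge S * tedge T),
         is_shuffle l -> is_shuffle m -> shuffle_iso l m -> label_set l = label_set m),
      (* injective on isomorphism classes *)
      (forall (A : tree) (l : tedge A -> tedge S * tedge T)
              (B : tree) (m : tedge B -> tedge S * tedge T),
         is_shuffle l -> is_shuffle m -> label_set l = label_set m -> shuffle_iso l m),
      (* surjective *)
      (forall X : {set tedge S * tedge T}, shuffle_subset X ->
         exists (A : tree) (l : tedge A -> tedge S * tedge T),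
           is_shuffle l /\ label_set l = X)
    & (* tree order of a shuffle = order induced from E(S) x E(T) *)
      (forall (A : tree) (l : tedge A -> tedge S * tedge T),
         is_shuffle l -> forall a a' : tedge A, tle a a' = prod_le (l a) (l a'))].
Proof.
split.
- by move=> A l Hs; apply: label_subset.
- by move=> A l B m _ _; apply: iso_label.
- by move=> A l B m Hl Hm E; apply: label_iso.
- by move=> X HX; apply: surj.
- by move=> A l Hs a b; apply: shuffle_order.
Qed.
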